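(* Let $R$ be a reduced ring and $n\ge 1$. Then the ring $$S=\left\{\begin{pmatrix} a & a_{12} & \cdots & a_{1n}\\ 0 & a & \cdots & a_{2n}\\ \vdots & \vdots & \ddots & \vdots\\ 0&0&\cdots & a\end{pmatrix} : a, a_{ij}\in R\right\}$$ of upper triangular $n\times n$ matrices over $R$ with constant diagonal is almost Armendariz.
   Context: All rings are associative with identity. A ring is reduced if it has no nonzero nilpotent elements. For a ring $R$, $P(R)$ denotes the prime radical of $R$ (the intersection of all prime ideals of $R$, equivalently the set of strongly nilpotent elements of $R$). A ring $R$ is called almost Armendariz if whenever $f(x)=\sum_{i=0}^m a_ix^i$ and $g(x)=\sum_{j=0}^n b_jx^j\in R[x]$ satisfy $f(x)g(x)=0$, then $a_ib_j\in P(R)$ for all $0\le i\le m$, $0\le j\le n$. *)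

(* Defs.v *)
From HB Require Import structures.
From mathcomp Require Import all_boot all_order all_algebra.
Set Implicit Arguments. Unset Strict Implicit. Unset Printing Implicit Defensive.
Import Order.TTheory GRing.Theory Num.Theory.
Local Open Scope ring_scope.

Definition reduced (R : nzRingType) : Prop :=
  forall (x : R) (k : nat), x ^+ k = 0 -> x = 0.

Definition is_ideal (R : nzRingType) (I : R -> Prop) : Prop :=
  [/\ I 0,
      (forall x y, I x -> I y -> I (x - y)),
      (forall r x, I x -> I (r * x)) &
      (forall r x, I x -> I (x * r))].

Definition prime_ideal (R : nzRingType) (I : R -> Prop) : Prop :=
  [/\ is_ideal I, ~ I 1 &
      (forall a b, (forall r, I (a * r * b)) -> I a \/ I b)].

Definition prime_radical (R : nzRingType) (x : R) : Prop :=
  forall I : R -> Prop, prime_ideal I -> I x.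

Definition almost_armendariz (R : nzRingType) : Prop :=
  forall f g : {poly R}, f * g = 0 ->
    forall i j : nat, prime_radical (f`_i * g`_j).

Section UTCD.
Variables (R : nzRingType) (n : nat).

(* Matrices of size n.+1 (i.e. n >= 1 is encoded by writing the size as n.+1). *)
Definition utcd_pred : {pred 'M[R]_n.+1} :=
  fun A => [forall i : 'I_n.+1, forall j : 'I_n.+1, (j < i)%N ==> (A i j == 0)]
        && [forall i : 'I_n.+1, A i i == A ord0 ord0].

Lemma utcd_subring_closed : subring_closed utcd_pred.
Proof.
split.
- apply/andP; split; apply/forallP=> i; [apply/forallP=> j; apply/implyP=> lt_ji|].
    have nij : i != j by apply/eqP=> E; rewrite E ltnn in lt_ji.
    by rewrite mxE (negbTE nij).
  by rewrite !mxE !eqxx.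
- move=> A B /andP[/forallP tA /forallP dA] /andP[/forallP tB /forallP dB].
  apply/andP; split; apply/forallP=> i; [apply/forallP=> j; apply/implyP=> lt_ji|].
    rewrite !mxE.
    move: (tA i) (tB i) => /forallP/(_ j)/implyP/(_ lt_ji)/eqP-> /forallP/(_ j)/implyP/(_ lt_ji)/eqP->.
    by rewrite subrr.
  by rewrite !mxE (eqP (dA i)) (eqP (dB i)).
- move=> A B /andP[/forallP tA /forallP dA] /andP[/forallP tB /forallP dB].
  have key : forall i j : 'I_n.+1, (A *m B) i j =
    if (j < i)%N then 0 else if i == j then A i i * B i i else (A *m B) i j.
    move=> i j; case: ltnP => lt_ji.
      rewrite mxE big1 // => k _.
      case: (ltnP k i) => lt_ki.
        by move: (tA i) => /forallP/(_ k)/implyP/(_ lt_ki)/eqP->; rewrite mul0r.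
      have lt_jk : (j < k)%N by apply: leq_trans lt_ji lt_ki.
      by move: (tB k) => /forallP/(_ j)/implyP/(_ lt_jk)/eqP->; rewrite mulr0.
    case: eqP => // <-.
    rewrite mxE (bigD1 i) //= big1 ?addr0 // => k nki.
    case: (ltnP k i) => lt_ki.
      by move: (tA i) => /forallP/(_ k)/implyP/(_ lt_ki)/eqP->; rewrite mul0r.
    have lt_ik : (i < k)%N by rewrite ltn_neqAle lt_ki andbT; apply: contra nki => /eqP/val_inj->.
    by move: (tB k) => /forallP/(_ i)/implyP/(_ lt_ik)/eqP->; rewrite mulr0.
  apply/andP; split; apply/forallP=> i; [apply/forallP=> j; apply/implyP=> lt_ji|].
    by rewrite key lt_ji.
  by rewrite key ltnn eqxx [X in _ == X]key ltnn eqxx (eqP (dA i)) (eqP (dB i)).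
Qed.

HB.instance Definition _ := GRing.isSubringClosed.Build _ utcd_pred utcd_subring_closed.

Record utcd := UTCD { utcd_val :> 'M[R]_n.+1; _ : utcd_val \in utcd_pred }.

HB.instance Definition _ := [isSub for utcd_val].
HB.instance Definition _ := [Choice of utcd by <:].
HB.instance Definition _ := [SubChoice_isSubNzRing of utcd by <:].

End UTCD.

(* Main.v *)
Require Import Defs.
From HB Require Import structures.
From mathcomp Require Import all_boot all_order all_algebra.
From mathcomp Require Import zify.
Import GRing.Theory.
Local Open Scope ring_scope.

Section Red.
Variable (R : nzRingType).
Hypothesis red : reduced R.

Lemma red_sq (x : R) : x * x = 0 -> x = 0.
Proof. by move=> h; apply: (red _ 2); rewrite expr2. Qed.

Lemma red_comm0 (a b : R) : a * b = 0 -> b * a = 0.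
Proof.
move=> h; apply: red_sq.
by rewrite mulrA -(mulrA b) h mulr0 mul0r.
Qed.

Lemma red_arm (a b : nat -> R) :
  (forall k, \sum_(i < k.+1) a i * b (k - i)%N = 0) ->
  forall i j, a i * b j = 0.
Proof.
move=> H.
suff S : forall k p, (p <= k)%N -> a p * b (k - p)%N = 0.
  by move=> i j; have := S (i + j)%N i (leq_addr _ _); rewrite addKn.
elim/ltn_ind => k IHk; elim/ltn_ind => p IHp Hp.
have Hpk : (p < k.+1)%N by [].
have E : \sum_(i < k.+1) a i * b (k - i)%N * a p = a p * b (k - p)%N * a p.
  rewrite (bigD1 (Ordinal Hpk)) //= big1 ?addr0 // => i ne.
  case: (ltngtP i p) => c.
  - by rewrite IHp ?mul0r //; have := ltn_ord i; lia.
  - have h : a p * b (k - i)%N = 0.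
      have := IHk (p + (k - i))%N _ p _; rewrite addKn; apply.
        by have := ltn_ord i; lia.
      by lia.
    by rewrite -mulrA (@red_comm0 _ _ h) mulr0.
  - by case/eqP: ne; apply: val_inj.
move: E; rewrite -big_distrl /= H mul0r => /esym E.
apply: red_sq; by rewrite mulrA E mul0r.
Qed.
End Red.

Section Mat.
Variables (R : nzRingType) (n : nat).

Definition depth (d : nat) (A : 'M[R]_n.+1) :=
  forall i j : 'I_n.+1, (j < i + d)%N -> A i j = 0.

Lemma depthM d e A B : depth d A -> depth e B -> depth (d + e) (A *m B).
Proof.
move=> hA hB i j lt; rewrite mxE big1 // => l _.
case: (ltnP l (i + d)) => c; first by rewrite hA ?mul0r.
by rewrite hB ?mulr0 //; lia.
Qed.

Lemma depth_mono d e A : (d <= e)%N -> depth e A -> depth d A.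
Proof. by move=> le h i j lt; apply: h; lia. Qed.

Lemma depth_top A : depth n.+1 A -> A = 0.
Proof.
move=> h; apply/matrixP => i j; rewrite mxE; apply: h.
by have := ltn_ord j; lia.
Qed.

Lemma utcd_depth0 (x : utcd R n) : depth 0 (val x).
Proof.
have := valP x; case/andP => /forallP h _ i j lt.
move: (h i) => /forallP/(_ j)/implyP; rewrite addn0 in lt.
by move=> /(_ lt)/eqP.
Qed.

Lemma utcd_depth1 (x : utcd R n) : val x ord0 ord0 = 0 -> depth 1 (val x).
Proof.
move=> h0; have := valP x; case/andP => _ /forallP h i j lt.
case: (ltnP j i) => c; first by apply: utcd_depth0; rewrite addn0.
have -> : j = i by apply: val_inj => /=; lia.
by rewrite (eqP (h i)).
Qed.

Lemma val_mulU (x y : utcd R n) : val (x * y) = val x *m val y.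
Proof. rewrite mulmxE. exact: rmorphM. Qed.

Lemma prime_contains (I : utcd R n -> Prop) (x : utcd R n) :
  prime_ideal I -> val x ord0 ord0 = 0 -> I x.
Proof.
case=> [[I0 _ _ _] _ Ipr] hx.
suff S : forall k, (k <= n)%N -> forall y : utcd R n,
    depth (n.+1 - k) (val y) -> I y.
  apply: (S n (leqnn n)); rewrite subSnn; exact: utcd_depth1.
elim=> [|k IH] lek y hy.
  have -> : y = 0 by apply: val_inj; rewrite subn0 in hy; rewrite (depth_top _ hy); exact: esym (raddf0 _).
  exact: I0.
have [] // := Ipr y y => r.
apply: IH; first by lia.
rewrite !val_mulU.
apply: (depth_mono _ ((n.+1 - k.+1) + 0 + (n.+1 - k.+1))%N); first by lia.
apply: depthM => //; apply: depthM => //; exact: utcd_depth0.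
Qed.

Definition phi (x : utcd R n) : R := val x ord0 ord0.

Lemma phiM x y : phi (x * y) = phi x * phi y.
Proof.
rewrite /phi val_mulU mxE (bigD1 ord0) //= big1 ?addr0 // => l nl.
rewrite (utcd_depth0 y) ?mulr0 //= addn0 lt0n; apply: contra nl => /eqP e.
by apply/eqP; apply: val_inj.
Qed.

Lemma phiD x y : phi (x + y) = phi x + phi y.
Proof. by rewrite /phi raddfD mxE. Qed.

Lemma phi0 : phi 0 = 0.
Proof. by rewrite /phi raddf0 mxE. Qed.

End Mat.

Theorem proposition2p2 (R : nzRingType) (n : nat) :
  reduced R -> almost_armendariz (utcd R n).
Proof.
move=> red f g fg i j I pI; apply: prime_contains => //.
change (@phi R n (f`_i * g`_j) = 0); rewrite phiM.
apply: (@red_arm R red (fun k => @phi R n f`_k) (fun k => @phi R n g`_k)) => k.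
have := congr1 (fun p : {poly utcd R n} => @phi R n p`_k) fg.
rewrite /= coef0 phi0 coefM (big_morph (@phi R n) (@phiD R n) (@phi0 R n)) => E.
transitivity (\sum_(l < k.+1) @phi R n (f`_l * g`_(k - l))); last exact: E.
by apply: eq_bigr => l _; rewrite phiM.
Qed.
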